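(* Let $\{C(G_n,S_n)\}_{n\ge1}$ be a family of expanders (with $G_n$ finite groups and $S_n$ symmetric subsets) of degree bounded by $d$. Let $k\ge2$ be an integer and, for each $n$, let $\sigma_{1n},\dots,\sigma_{kn}$ be pairwise commuting automorphisms of $G_n$ of order at most $2$. Let $T_n=S_n\cup\bigcup_i\sigma_{in}(S_n)\cup\bigcup_{i,j}(\sigma_{in}\circ\sigma_{jn})(S_n)\cup\cdots\cup(\sigma_{1n}\circ\sigma_{2n}\circ\cdots\circ\sigma_{kn})(S_n)$, i.e. $T_n=\bigcup_{I\subseteq\{1,\dots,k\}}(\prod_{i\in I}\sigma_{in})(S_n)$. Then: (1) for each $1\le i\le k$, the twisted Cayley graphs $\{C(G_n,T_n)^{\sigma_{in}}\}_n$ form a family of expanders of degree bounded by $2^kd$; (2) for any $1\le i,j\le k$, the eigenvalues of the adjacency operators of $C(G_n,T_n)^{\sigma_{in}}$ and $C(G_n,T_n)^{\sigma_{jn}}$ coincide up to factors of $\pm1$.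
   Context: $C(G,S)$ has vertex set $G$ and an edge from $x$ to $xs$ for each $s\in S$; for an automorphism $\tau$, $C(G,S)^\tau$ has an edge from $x$ to $\tau(xs)$. A family of expanders of degree bounded by $d$ is a sequence of finite undirected graphs of degree at most $d$, together with a constant $\varepsilon>0$ such that each graph is an $\varepsilon$-vertex expander: for every vertex set $A$ with $|A|\le|V|/2$, at least $\varepsilon|A|$ vertices outside $A$ are adjacent to some vertex of $A$. ''Up to factors of $\pm1$'' means there is a bijection between the multisets of eigenvalues under which each eigenvalue is sent to itself or its negative. *)

(* Defs.v *)
From HB Require Import structures.
From mathcomp Require Import all_boot all_order all_algebra all_fingroup all_field.
Set Implicit Arguments. Unset Strict Implicit. Unset Printing Implicit Defensive.
Import Order.TTheory GRing.Theory Num.Theory.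

Definition out_nbhd (V : finType) (adj : rel V) (A : {set V}) : {set V} :=
  [set y | (y \notin A) && [exists x in A, adj x y]].

Definition vertex_expander (V : finType) (adj : rel V) (eps : algC) : Prop :=
  forall A : {set V}, (2 * #|A| <= #|V|)%N ->
    (eps * (#|A|%:R) <= (#|out_nbhd adj A|%:R))%R.

Definition degree_bounded (V : finType) (adj : rel V) (d : nat) : Prop :=
  forall x : V, (#|[set y | adj x y]| <= d)%N.

Definition expander_family (V : nat -> finType) (adj : forall n, rel (V n))
    (d : nat) : Prop :=
  (forall n, degree_bounded (adj n) d) /\
  exists eps : algC, (0 < eps)%R /\ forall n, vertex_expander (adj n) eps.

(* twisted Cayley graph C(G,S)^tau: edge x -- tau(x s), s in S
   (symmetrized, so it is an undirected graph); tau = id gives C(G,S). *)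
Definition cay_adj (gT : finGroupType) (tau : gT -> gT) (S : {set gT}) : rel gT :=
  fun x y => [exists s in S, y == tau (x * s)%g] || [exists s in S, x == tau (y * s)%g].

Definition cay_adjmx (gT : finGroupType) (tau : gT -> gT) (S : {set gT})
  : 'M[algC]_#|gT| :=
  \matrix_(i, j) (#|[set s in S | tau (enum_val i * s)%g == enum_val j]|)%:R%R.

Definition comp_over (gT : Type) (k : nat) (sigma : 'I_k -> gT -> gT)
  (I : {set 'I_k}) : gT -> gT :=
  foldr (fun i f => sigma i \o f) id (enum I).

Definition Tset (gT : finGroupType) (k : nat) (sigma : 'I_k -> gT -> gT)
  (S : {set gT}) : {set gT} :=
  \bigcup_(I : {set 'I_k}) (comp_over sigma I) @: S.

Definition eigen_list (m : nat) (A : 'M[algC]_m) (s : seq algC) : Prop :=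
  (char_poly A = \prod_(z <- s) ('X - z%:P))%R.

Definition eq_up_to_sign (s1 s2 : seq algC) : Prop :=
  exists t : seq algC, size t = size s1 /\
    (forall i, (i < size s1)%N -> t`_i = s1`_i \/ t`_i = - s1`_i)%R /\
    perm_eq t s2.

Definition spectra_eq_up_to_sign (m : nat) (A B : 'M[algC]_m) : Prop :=
  forall s1 s2, eigen_list A s1 -> eigen_list B s2 -> eq_up_to_sign s1 s2.

(* Main.v *)
Require Import Defs.
From HB Require Import structures.
From mathcomp Require Import all_boot all_order all_algebra all_fingroup all_field.
From mathcomp Require Import zify ring.
Set Implicit Arguments. Unset Strict Implicit. Unset Printing Implicit Defensive.
Import Order.TTheory GRing.Theory Num.Theory.

Lemma morph_inv (gT : finGroupType) (f : gT -> gT) :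
  {morph f : x y / (x * y)%g} -> forall x, f (x^-1)%g = ((f x)^-1)%g.
Proof.
move=> fM x.
have f1 : f 1%g = 1%g.
  by apply: (@mulgI _ (f 1%g)); rewrite -fM !mulg1.
by apply/eqP; rewrite eq_sym eq_invg_mul -fM mulgV f1.
Qed.

Section Comp.
Variables (gT : finGroupType) (k : nat) (sg : 'I_k -> gT -> gT).
Hypothesis sgK : forall i x, sg i (sg i x) = x.
Hypothesis sgC : forall i j x, sg i (sg j x) = sg j (sg i x).
Hypothesis sgM : forall i, {morph sg i : x y / (x * y)%g}.

Definition cf (l : seq 'I_k) : gT -> gT := foldr (fun i f => sg i \o f) id l.

Lemma cf_rem l i x : i \in l -> cf l x = sg i (cf (rem i l) x).
Proof.
elim: l => [|j l IH] //=; rewrite inE.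
case: (eqVneq j i) => [->|ne] //=.
by move=> /IH ->; rewrite sgC.
Qed.

Lemma cf_perm l l' : perm_eq l l' -> forall x, cf l x = cf l' x.
Proof.
elim: l l' => [|i l IH] l' hp x.
  by have := perm_size hp; case: l' {hp}.
have il' : i \in l' by rewrite -(perm_mem hp) inE eqxx.
rewrite (cf_rem x il') /=; congr (sg i _); apply: IH.
by rewrite -(perm_cons i) (perm_trans hp) // perm_to_rem.
Qed.

Lemma comp_over_cf I : comp_over sg I = cf (enum I).
Proof. by []. Qed.

Lemma sg_comp_over I i x : exists J, sg i (comp_over sg I x) = comp_over sg J x.
Proof.
rewrite !comp_over_cf.
case: (boolP (i \in I)) => iI.
  exists (I :\ i).
  have ie : i \in enum I by rewrite mem_enum.
  rewrite (cf_rem x ie) sgK; apply: cf_perm.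
  apply: uniq_perm; [exact: rem_uniq (enum_uniq _)|exact: enum_uniq|].
  move=> y; rewrite mem_rem_uniq ?enum_uniq // !inE !mem_enum.
  by rewrite /= in_setD1.
exists (i |: I).
have ie : i \in enum (i |: I) by rewrite mem_enum setU11.
rewrite comp_over_cf (cf_rem x ie); congr (sg i _); apply: cf_perm.
apply: uniq_perm; [exact: enum_uniq|exact: rem_uniq (enum_uniq _)|].
move=> y; rewrite mem_rem_uniq ?enum_uniq // !inE !mem_enum /= in_setU1.
by case: eqP => [->|]; rewrite ?(negbTE iI) ?andbF ?andbT.
Qed.

Lemma cf_morph l : {morph cf l : x y / (x * y)%g}.
Proof. by elim: l => [|i l IH] x y //=; rewrite IH sgM. Qed.

Variable S : {set gT}.

Lemma TsetP x : reflect (exists I, exists2 s, s \in S & x = comp_over sg I s)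
                        (x \in Tset sg S).
Proof.
apply: (iffP bigcupP) => [[I _ /imsetP [s sS ->]]|[I [s sS ->]]].
  by exists I, s.
by exists I => //; apply: imset_f.
Qed.

Lemma Tset_sg i x : x \in Tset sg S -> sg i x \in Tset sg S.
Proof.
case/TsetP => I [s sS ->].
have [J ->] := sg_comp_over I i s.
by apply/TsetP; exists J, s.
Qed.

Lemma Tset_sgE i x : (sg i x \in Tset sg S) = (x \in Tset sg S).
Proof.
apply/idP/idP; last exact: Tset_sg.
by move/(Tset_sg i); rewrite sgK.
Qed.

Lemma Tset_inv x : (forall s, s \in S -> (s^-1)%g \in S) ->
  x \in Tset sg S -> (x^-1)%g \in Tset sg S.
Proof.
move=> Ssym /TsetP [I [s sS ->]].
apply/TsetP; exists I, (s^-1)%g; first exact: Ssym.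
by rewrite comp_over_cf (morph_inv (@cf_morph _)).
Qed.

Lemma S_sub_Tset : S \subset Tset sg S.
Proof.
apply/subsetP => s sS; apply/TsetP; exists set0, s => //.
by rewrite comp_over_cf enum_set0.
Qed.

Lemma card_Tset : (#|Tset sg S| <= 2 ^ k * #|S|)%N.
Proof.
rewrite /Tset.
have -> : (2 ^ k = #|{set 'I_k}|)%N by rewrite -cardsT -powersetT card_powerset cardsT card_ord.
rewrite -sum_nat_const.
apply: (big_ind2 (fun (A : {set gT}) n => #|A| <= n)%N) => //.
  by rewrite cards0.
  move=> A1 n1 A2 n2 h1 h2; apply: leq_trans (leq_add h1 h2).
  by rewrite -cardsUI leq_addr.
move=> I _; exact: leq_imset_card.
Qed.

End Comp.

Section Adjs.
Local Open Scope ring_scope.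
Section Adj.
Variables (gT : finGroupType) (sg : gT -> gT) (T : {set gT}).
Hypothesis sgK : forall x, sg (sg x) = x.
Hypothesis sgM : {morph sg : x y / (x * y)%g}.
Hypothesis sgT : forall x, (sg x \in T) = (x \in T).

Lemma adjmx_entry i j :
  cay_adjmx sg T i j = ((((enum_val i)^-1 * sg (enum_val j))%g \in T) : nat)%:R.
Proof.
rewrite mxE; congr (_%:R).
set z := ((enum_val i)^-1 * sg (enum_val j))%g.
have -> : [set s in T | sg (enum_val i * s)%g == enum_val j] = [set s in T | s == z].
  apply/setP => s; rewrite !inE; congr (_ && _).
  rewrite -{1}(sgK (enum_val j)) (inj_eq (can_inj sgK)).
  exact: (can2_eq (mulKg _) (mulKVg _)).
case: (boolP (z \in T)) => zT.
  have -> : [set s in T | s == z] = [set z].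
    by apply/setP => s; rewrite !inE; case: eqP => [->|]; rewrite ?zT ?andbF.
  by rewrite cards1.
have -> : [set s in T | s == z] = set0.
  by apply/setP => s; rewrite !inE; case: eqP => [->|]; rewrite ?(negbTE zT) ?andbF.
by rewrite cards0.
Qed.

Lemma adjmx_sq :
  cay_adjmx sg T *m cay_adjmx sg T =
  \matrix_(i, j) \sum_(z : gT)
     (((((enum_val i)^-1 * z)%g \in T) : nat)%:R *
      ((((z^-1 * enum_val j)%g \in T) : nat)%:R : algC)).
Proof.
apply/matrixP => i j; rewrite !mxE.
under eq_bigr do rewrite !adjmx_entry.
rewrite -(big_enum_val (A := gT) (fun y =>
   ((((enum_val i)^-1 * sg y)%g \in T) : nat)%:R *
      ((((y^-1 * sg (enum_val j))%g \in T) : nat)%:R : algC))) /=.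
rewrite (reindex_inj (can_inj sgK)) /=.
apply: eq_big => // z _.
rewrite (sgK z). rewrite -(sgT (z^-1 * enum_val j)%g) sgM (morph_inv sgM).
by [].
Qed.

End Adj.

End Adjs.

Section Part2.
Local Open Scope ring_scope.
Lemma prod_negX (s : seq algC) :
  \prod_(z <- s) (- 'X - z%:P) = (-1) ^+ size s * \prod_(z <- s) ('X + z%:P).
Proof.
elim: s => [|a s IH]; first by rewrite !big_nil expr0 mul1r.
by rewrite !big_cons IH /= exprS; ring.
Qed.

Lemma charsq m (M : 'M[algC]_m) (s : seq algC) :
  char_poly M = \prod_(z <- s) ('X - z%:P) ->
  char_poly (M *m M) = \prod_(z <- s) ('X - (z * z)%:P).
Proof.
move=> hM.
have szs : size s = m.
  by have := size_char_poly M; rewrite hM size_prod_XsubC => -[].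
apply/eqP; rewrite -subr_eq0 -(comp_poly_eq0 _ (q := 'X^2)); last by rewrite size_polyXn.
rewrite comp_polyB subr_eq0; apply/eqP.
have E1 : char_poly (M *m M) \Po 'X^2 =
   \det (('X%:M - map_mx polyC M) *m ('X%:M + map_mx polyC M)).
  rewrite /char_poly -det_map_mx; congr (\det _).
  apply/matrixP => i j.
  rewrite mulmxDr !mulmxBl !mul_mx_scalar mul_scalar_mx -map_mxM.
  rewrite scale_scalar_mx.
  rewrite addrA subrK !mxE /= rmorphB /= rmorphMn /= comp_polyX comp_polyC.
  by rewrite expr2.
have E2 : \det ('X%:M + map_mx polyC M) = (-1) ^+ m * (char_poly M \Po (- 'X)).
  rewrite /char_poly -det_map_mx.
  have -> : map_mx (comp_poly (- 'X)) (char_poly_mx M) = (-1) *: ('X%:M + map_mx polyC M).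
    apply/matrixP => i j.
    rewrite !mxE /= rmorphB /= rmorphMn /= comp_polyX comp_polyC.
    by rewrite mulN1r opprD mulNrn.
  by rewrite (@detZ _ m (-1) ('X%:M + map_mx polyC M)) signrMK.
rewrite E1 det_mulmx E2 {1}/char_poly -/(char_poly M) hM.
rewrite rmorph_prod /=.
have -> : \prod_(i <- s) (('X - i%:P) \Po - 'X) = \prod_(i <- s) (- 'X - i%:P).
  by apply: eq_bigr => z _; rewrite comp_polyB comp_polyX comp_polyC.
rewrite prod_negX szs signrMK.
rewrite rmorph_prod /= -big_split /=.
apply: eq_bigr => z _.
by rewrite rmorphB /= comp_polyX comp_polyC polyCM; ring.
Qed.

Lemma perm_map_lift (f : algC -> algC) (s1 s2 : seq algC) :
  perm_eq (map f s1) (map f s2) ->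
  exists t : seq algC, size t = size s1 /\
    (forall i, (i < size s1)%N -> f t`_i = f s1`_i) /\ perm_eq t s2.
Proof.
elim: s1 s2 => [|a s1 IH] s2 hp.
  exists [::]; split => //; split => //.
  by have := perm_size hp; rewrite size_map /=; case: s2 {hp}.
have : f a \in map f s2 by rewrite -(perm_mem hp) inE eqxx.
case/mapP => b bs2 fab.
have hp2 : perm_eq (map f s1) (map f (rem b s2)).
  have := perm_trans hp (perm_map f (perm_to_rem bs2)).
  by rewrite /= fab perm_cons.
have [t [st [ft pt]]] := IH _ hp2.
exists (b :: t); split; first by rewrite /= st.
split.
  by case=> [|i] /=; [rewrite fab | apply: ft].
apply: (@perm_trans _ (b :: rem b s2)); first by rewrite perm_cons.
by rewrite perm_sym perm_to_rem.
Qed.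

Lemma spectra_sq m (M1 M2 : 'M[algC]_m) :
  M1 *m M1 = M2 *m M2 -> spectra_eq_up_to_sign M1 M2.
Proof.
move=> E s1 s2 h1 h2.
have c1 := @charsq _ _ s1 h1; have c2 := @charsq _ _ s2 h2.
rewrite E c2 in c1.
have : \prod_(w <- map (fun z => z * z) s2) ('X - w%:P) =
       \prod_(w <- map (fun z => z * z) s1) ('X - w%:P) by rewrite !big_map.
move/prod_XsubC_eq; rewrite perm_sym => /perm_map_lift [t [st [ft pt]]].
exists t; split => //; split => // i /ft hi.
have : (t`_i - s1`_i) * (t`_i + s1`_i) == 0.
  apply/eqP; have -> : (t`_i - s1`_i) * (t`_i + s1`_i) = t`_i * t`_i - s1`_i * s1`_i by ring.
  by rewrite hi subrr.
rewrite mulf_eq0 => /orP [|]; rewrite ?subr_eq0 ?addr_eq0 => /eqP ->; by [left|right].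
Qed.

End Part2.

Open Scope group_scope.

Section Sets.
Variable gT : finGroupType.
Implicit Types (S X Y Z W H : {set gT}) (g h x y : gT).

Definition nb (S X : {set gT}) := [set y | [exists x in X, x^-1 * y \in S]].
Definition trs g X := [set y | g^-1 * y \in X].
Definition pre (f : gT -> gT) X := [set y | f y \in X].
Definition symd X Y := (X :\: Y) :|: (Y :\: X).

Lemma nbP S X y : reflect (exists2 x, x \in X & x^-1 * y \in S) (y \in nb S X).
Proof. by rewrite inE; apply: (iffP exists_inP) => [[x]|[x]]; exists x. Qed.

Lemma card_trs g X : #|trs g X| = #|X|.
Proof.
have -> : trs g X = (mulg g^-1) @^-1: X by apply/setP => y; rewrite !inE.
exact: card_preimset (mulgI _).
Qed.

Lemma card_pre f X : involutive f -> #|pre f X| = #|X|.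
Proof.
move=> fK; have -> : pre f X = f @^-1: X by apply/setP => y; rewrite !inE.
exact: card_preimset (inv_inj fK).
Qed.

Lemma card_U_le X Y : (#|X :|: Y| <= #|X| + #|Y|)%N.
Proof. by rewrite -cardsUI leq_addr. Qed.

Lemma card_symd X Y : (#|symd X Y| + 2 * #|X :&: Y| = #|X| + #|Y|)%N.
Proof.
have h1 := cardsID Y X; have h2 := cardsID X Y.
have h3 : #|symd X Y| = (#|X :\: Y| + #|Y :\: X|)%N.
  rewrite /symd cardsU.
  have -> : (X :\: Y) :&: (Y :\: X) = set0.
    by apply/setP => z; rewrite !inE; case: (z \in X); case: (z \in Y).
  by rewrite cards0 subn0.
rewrite setIC in h2. lia.
Qed.

Lemma symd_sym X Y : symd X Y = symd Y X.
Proof. by rewrite /symd setUC. Qed.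

Lemma symd_tri X Y Z : (#|symd X Z| <= #|symd X Y| + #|symd Y Z|)%N.
Proof.
apply: leq_trans (card_U_le _ _); apply: subset_leq_card.
apply/subsetP => z; rewrite !inE.
by case: (z \in X); case: (z \in Y); case: (z \in Z).
Qed.

Lemma symdC_card X Y : (#|symd X (~: Y)| + #|symd X Y| = #|gT|)%N.
Proof.
have -> : symd X (~: Y) = ~: symd X Y.
  by apply/setP => z; rewrite !inE; case: (z \in X); case: (z \in Y).
by rewrite addnC cardsC.
Qed.

Lemma symdCC X Y : symd (~: X) (~: Y) = symd X Y.
Proof. by apply/setP => z; rewrite !inE; case: (z \in X); case: (z \in Y). Qed.

Lemma trs_symd g X Y : trs g (symd X Y) = symd (trs g X) (trs g Y).
Proof. by apply/setP => z; rewrite !inE. Qed.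

Lemma trsC g X : trs g (~: X) = ~: trs g X.
Proof. by apply/setP => z; rewrite !inE. Qed.

Lemma trs_trs g h X : trs g (trs h X) = trs (g * h) X.
Proof. by apply/setP => z; rewrite !inE invMg mulgA. Qed.

Lemma trs1 X : trs 1 X = X.
Proof. by apply/setP => z; rewrite !inE invg1 mul1g. Qed.

Lemma card_symd_trs g X Y : #|symd (trs g X) (trs g Y)| = #|symd X Y|.
Proof. by rewrite -trs_symd card_trs. Qed.

Lemma pre_symd f X Y : pre f (symd X Y) = symd (pre f X) (pre f Y).
Proof. by apply/setP => z; rewrite !inE. Qed.

Lemma symd_sub X Y Z : X \subset Z -> Y \subset Z -> X :\: Y \subset symd X Y.
Proof. by move=> _ _; apply/subsetP => z; rewrite !inE => ->. Qed.

Lemma card_nb S X : (#|nb S X| <= #|X| * #|S|)%N.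
Proof.
have sub : nb S X \subset \bigcup_(x in X) [set x * s | s in S].
  apply/subsetP => y /nbP [x xX xy]; apply/bigcupP; exists x => //.
  by apply/imsetP; exists (x^-1 * y) => //; rewrite mulKVg.
apply: leq_trans (subset_leq_card sub) _.
rewrite -sum_nat_const.
apply: (big_ind2 (fun (A : {set gT}) n => #|A| <= n)%N) => //.
  by rewrite cards0.
  move=> A1 n1 A2 n2 h1 h2; exact: leq_trans (card_U_le _ _) (leq_add h1 h2).
move=> x _; exact: leq_imset_card.
Qed.

Lemma card_sub_sum X (P : pred gT) : #|[set x in X | P x]| = (\sum_(x in X) P x)%N.
Proof.
rewrite -sum1_card (eq_bigl (fun x => (x \in X) && P x)); last by move=> x; rewrite !inE.
by rewrite big_mkcondr; apply: eq_bigr => x _; case: (P x).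
Qed.

Lemma avg H Z (dl : nat) :
  (forall x y, x \in H -> y \in H -> x * y^-1 \in H) ->
  Z \subset H ->
  (forall h, h \in H -> #|symd Z (trs h Z)| <= dl)%N ->
  (2 * #|Z| * #|H| <= #|H| * dl + 2 * (#|Z| * #|Z|))%N.
Proof.
move=> Hcl ZH hd.
have e1 : (\sum_(h in H) (#|symd Z (trs h Z)| + 2 * #|Z :&: trs h Z|) = #|H| * (2 * #|Z|))%N.
  rewrite -sum_nat_const; apply: eq_bigr => h _.
  by rewrite card_symd card_trs; lia.
have e2 : (\sum_(h in H) #|symd Z (trs h Z)| <= #|H| * dl)%N.
  rewrite -sum_nat_const; exact: leq_sum.
have e3 : (\sum_(h in H) #|Z :&: trs h Z| = #|Z| * #|Z|)%N.
  have -> : (\sum_(h in H) #|Z :&: trs h Z| = \sum_(h in H) \sum_(z in Z) (((h^-1 * z)%g \in Z) : nat))%N.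
    apply: eq_bigr => h _; rewrite -card_sub_sum.
    by apply: eq_card => z; rewrite !inE.
  rewrite exchange_big /= -sum_nat_const; apply: eq_bigr => z zZ.
  rewrite -card_sub_sum.
  have -> : [set h in H | h^-1 * z \in Z] = [set z * y^-1 | y in Z].
    apply/setP => h; rewrite !inE; apply/andP/imsetP.
      by move=> [hH hz]; exists (h^-1 * z) => //; rewrite invMg invgK mulKVg.
    move=> [y yZ ->]; split.
      by apply: Hcl; apply: (subsetP ZH).
    by rewrite invMg invgK -mulgA mulVg mulg1.
  by apply: card_imset => y1 y2 /mulgI /invg_inj.
rewrite big_split /= in e1.
rewrite -big_distrr /= e3 in e1.
have -> : (2 * #|Z| * #|H| = #|H| * (2 * #|Z|))%N by rewrite mulnC.
by rewrite -e1 leq_add2r.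
Qed.

End Sets.

Lemma boolY (a1 a2 b1 b2 e1 e2 e3 e4 : bool) :
  (a1 -> b1 -> e1) -> (~~a1 -> ~~b1 -> e2) -> (a2 -> b2 -> e3) -> (~~a2 -> ~~b2 -> e4) ->
  (a1 (+) a2) -> ~~(b1 (+) b2) -> [|| e1, e2, e3 | e4].
Proof.
case: a1 a2 b1 b2 => [] [] [] [] //= h1 h2 h3 h4 _ _;
 by [rewrite (h1 isT isT) | rewrite (h2 isT isT) ?orbT | rewrite (h3 isT isT) !orbT | rewrite (h4 isT isT) !orbT].
Qed.
Lemma boolX (a1 a2 b1 b2 e1 e2 e3 e4 : bool) :
  (a1 -> b1 -> e1) -> (~~a1 -> ~~b1 -> e2) -> (a2 -> b2 -> e3) -> (~~a2 -> ~~b2 -> e4) ->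
  ~~(a1 (+) a2) -> (b1 (+) b2) -> [|| e1, e2, e3 | e4].
Proof.
case: a1 a2 b1 b2 => [] [] [] [] //= h1 h2 h3 h4 _ _;
 by [rewrite (h1 isT isT) | rewrite (h2 isT isT) ?orbT | rewrite (h3 isT isT) !orbT | rewrite (h4 isT isT) !orbT].
Qed.

Section Key.
Variables (gT : finGroupType) (S : {set gT}) (sg : gT -> gT) (M d : nat).
Implicit Types (X Y Z E A : {set gT}) (g h x y : gT).
Hypothesis Ssym : forall s, s \in S -> s^-1 \in S.
Hypothesis sgK : involutive sg.
Hypothesis sgM : {morph sg : x y / x * y}.
Hypothesis Sd : (#|S| <= d)%N.
Hypothesis hexp : forall X : {set gT},
  (2 * #|X| <= #|gT|)%N -> (#|X| <= M * #|nb S X :\: X|)%N.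

Lemma mem_trs g X y : (y \in trs g X) = (g^-1 * y \in X).
Proof. by rewrite inE. Qed.
Lemma mem_pre (f : gT -> gT) X y : (y \in pre f X) = (f y \in X).
Proof. by rewrite inE. Qed.
Lemma mem_symd X Y y : (y \in symd X Y) = (y \in X) (+) (y \in Y).
Proof. by rewrite !inE; case: (y \in X); case: (y \in Y). Qed.

Lemma nb_mem x y X : x \in X -> x^-1 * y \in S -> y \in nb S X.
Proof. by move=> xX xy; apply/nbP; exists x. Qed.

Lemma nb_back x y X : y \in X -> x^-1 * y \in S -> x \in nb S X.
Proof.
move=> yX xy; apply/nbP; exists y => //.
by have := Ssym xy; rewrite invMg invgK.
Qed.

Lemma nbU X Y : nb S (X :|: Y) = nb S X :|: nb S Y.
Proof.
apply/setP => y; rewrite in_setU; apply/nbP/orP.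
  by case=> x; rewrite in_setU => /orP [] xX xy; [left|right]; apply: nb_mem xX xy.
by case=> /nbP [x xX xy]; exists x; rewrite // in_setU xX ?orbT.
Qed.

Lemma dich Z E : nb S Z :\: Z \subset E -> nb S (~: Z) :\: ~: Z \subset E ->
  (#|Z| <= M * #|E|)%N \/ (#|gT| <= #|Z| + M * #|E|)%N.
Proof.
move=> h1 h2; have cZ : (#|Z| + #|~: Z| = #|gT|)%N := cardsC Z.
case: (leqP (2 * #|Z|) #|gT|) => h.
  by left; apply: leq_trans (hexp h) _; rewrite leq_mul2l subset_leq_card ?orbT.
right; have h' : (2 * #|~: Z| <= #|gT|)%N by lia.
have := leq_trans (hexp h') (_ : _ <= M * #|E|)%N.
rewrite leq_mul2l subset_leq_card ?orbT // => /(_ isT); lia.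
Qed.

Lemma trs_rel g x y : (g^-1 * x)^-1 * (g^-1 * y) = x^-1 * y.
Proof. by rewrite invMg invgK -mulgA mulKVg. Qed.

Lemma pre_trs g X : pre sg (trs g X) = trs (sg g) (pre sg X).
Proof.
apply/setP => y; rewrite !inE sgM (morph_inv sgM) sgK.
by [].
Qed.

Theorem key A : (2 * #|A| <= #|gT|)%N ->
  (#|A| <= 70 * (M.+1 * (M.+1 * d.+1)) *
     #|(nb S (pre sg A) :|: pre sg (nb S A)) :\: A|)%N.
Proof.
move=> hA.
set O := (_ :\: A); set o := #|O|.
set A' := pre sg A.
have cA' : #|A'| = #|A| := card_pre _ sgK.
have sgI : forall x, sg x^-1 = (sg x)^-1 := morph_inv sgM.
set F1 := nb S A :\: A'.
have cF1 : (#|F1| <= o)%N.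
  rewrite -(card_pre F1 sgK); apply: subset_leq_card; apply/subsetP => y.
  rewrite mem_pre !in_setD mem_pre sgK in_setU mem_pre => /andP [-> ->].
  by rewrite orbT.
set F2 := nb S A' :\: A.
have cF2 : (#|F2| <= o)%N.
  apply: subset_leq_card; apply/subsetP => y.
  by rewrite !in_setD in_setU => /andP [-> ->].
set I := A :&: A'.
have cI : (#|I| <= M * (2 * o))%N.
  have hI : (2 * #|I| <= #|gT|)%N.
    by apply: leq_trans hA; rewrite leq_mul2l subset_leq_card ?subsetIl.
  apply: leq_trans (hexp hI) _; rewrite leq_mul2l; apply/orP; right.
  apply: (@leq_trans #|F1 :|: F2|); last first.
    by apply: leq_trans (card_U_le _ _) _; apply: leq_trans (leq_add cF1 cF2) _; lia.
  apply: subset_leq_card; apply/subsetP => y.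
  rewrite in_setD => /andP [yI /nbP [x xI xy]].
  move: xI yI; rewrite !in_setI !in_setU !in_setD => /andP [xA xA'].
  rewrite (nb_mem xA xy) (nb_mem xA' xy).
  by case: (y \in A); case: (y \in A').
set B := A :|: A'.
have cB : (#|nb S B :\: B| <= 2 * o)%N.
  apply: (@leq_trans #|F1 :|: F2|); last first.
    by apply: leq_trans (card_U_le _ _) _; apply: leq_trans (leq_add cF1 cF2) _; lia.
  apply: subset_leq_card; apply/subsetP => y.
  rewrite in_setD nbU !in_setU !in_setD.
  by case: (y \in A); case: (y \in A'); case: (y \in nb S A); case: (y \in nb S A').
case: (leqP (2 * #|B|) #|gT|) => hB.
  have h1 : (#|B| <= M * (2 * o))%N.
    by apply: leq_trans (hexp hB) _; rewrite leq_mul2l cB orbT.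
  apply: leq_trans (leq_trans (subset_leq_card (subsetUl A A')) h1) _.
  nia.

set C := ~: B.
have cBC : (#|B| + #|C| = #|gT|)%N := cardsC B.
have hC : (2 * #|C| <= #|gT|)%N by lia.
set D := nb S B :\: B.
have cND : (#|nb S C :\: C| <= 2 * o * d)%N.
  apply: (@leq_trans #|nb S D|).
    apply: subset_leq_card; apply/subsetP => y.
    rewrite in_setD => /andP [yC /nbP [x xC xy]].
    have yB : y \in B by move: yC; rewrite in_setC negbK.
    apply: (nb_mem _ xy); rewrite in_setD (nb_back yB xy) andbT.
    by move: xC; rewrite in_setC.
  apply: leq_trans (card_nb _ _) _.
  by apply: leq_mul cB Sd.
have cC : (#|C| <= M * (2 * o * d))%N.
  by apply: leq_trans (hexp hC) _; rewrite leq_mul2l cND orbT.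
have cBle : (#|B| <= 2 * #|A|)%N.
  by apply: leq_trans (card_U_le _ _) _; rewrite cA'; lia.
set Ea := nb S A :&: A.
have cEa : (#|Ea| <= o + #|I|)%N.
  apply: (@leq_trans #|F1 :|: I|); last first.
    by apply: leq_trans (card_U_le _ _) _; rewrite leq_add2r.
  apply: subset_leq_card; apply/subsetP => y.
  rewrite !in_setI !in_setU !in_setD !in_setI => /andP [-> ->].
  by case: (y \in A').
set Eb := nb S (~: A) :&: ~: A.
have cEb : (#|Eb| <= o + #|C| + 2 * o * d)%N.
  apply: (@leq_trans #|F2 :|: (C :|: (nb S C :\: C))|); last first.
    apply: leq_trans (card_U_le _ _) _; rewrite -addnA leq_add //.
    by apply: leq_trans (card_U_le _ _) _; rewrite leq_add2l.
  apply: subset_leq_card; apply/subsetP => y.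
  rewrite in_setI => /andP [/nbP [x xA xy] yA].
  move: xA yA; rewrite !in_setC => xA yA.
  rewrite !in_setU !in_setD !in_setC yA /=.
  case xA': (x \in A').
    by rewrite (nb_mem xA' xy).
  have xC : x \in C by rewrite in_setC in_setU (negbTE xA) xA'.
  by rewrite (nb_mem xC xy) andbT; case: (y \in B); rewrite ?orbT.

set P := (M.+1 * d.+1 * o)%N.
set Q := (M.+1 * P)%N.
have eK : (70 * (M.+1 * (M.+1 * d.+1)) * o = 70 * Q)%N.
  by rewrite /Q /P; nia.
rewrite eK; case: (leqP #|A| (70 * Q)) => // hbig; exfalso.
have pI : (#|I| <= 2 * P)%N by apply: leq_trans cI _; rewrite /P; nia.
have pC : (#|C| <= 2 * P)%N by apply: leq_trans cC _; rewrite /P; nia.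
have pND : (2 * o * d <= 2 * P)%N by rewrite /P; nia.
have po : (o <= P)%N by rewrite /P; nia.
have pPQ : (P <= Q)%N by rewrite /Q; nia.
set e := (#|Ea| + #|Eb|)%N.
have pe : (e <= 8 * P)%N by rewrite /e; lia.
set dl := (M * (2 * e))%N.
have pdl : (dl <= 16 * Q)%N.
  rewrite /dl /Q; apply: (@leq_trans (M * (16 * P))); first by rewrite leq_mul2l; lia.
  nia.
have g3 : (3 * dl < #|gT|)%N by lia.
have g4 : (2 * (#|I| + #|C|) + 2 * dl < #|gT|)%N by lia.
have g5 : (dl < #|A|)%N by lia.
pose Y g := symd A (trs g A).
have dichY : forall g, (#|Y g| <= dl)%N \/ (#|gT| <= #|Y g| + dl)%N.
  move=> g.
  have cE : (M * #|Ea :|: Eb :|: trs g Ea :|: trs g Eb| <= dl)%N.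
    rewrite /dl leq_mul2l; apply/orP; right.
    apply: leq_trans (card_U_le _ _) _; rewrite card_trs.
    apply: leq_trans (leq_add (card_U_le _ _) (leqnn _)) _; rewrite card_trs.
    apply: leq_trans (leq_add (leq_add (card_U_le _ _) (leqnn _)) (leqnn _)) _.
    have L : forall a b : nat, (a + b + a + b <= 2 * (a + b))%N by move=> a b; lia.
    exact: L.
  have h1 : nb S (Y g) :\: Y g \subset Ea :|: Eb :|: trs g Ea :|: trs g Eb.
    apply/subsetP => y; rewrite in_setD => /andP [yY /nbP [x xY xy]].
    move: yY xY; rewrite !mem_symd !mem_trs => yY xY.
    rewrite !in_setU -!orbA; apply: (boolY _ _ _ _ xY yY).
    - by move=> xA yA; rewrite in_setI yA (nb_mem xA xy).
    - by move=> xA yA; rewrite in_setI in_setC yA (@nb_mem x) ?in_setC.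
    - by move=> xA yA; rewrite mem_trs in_setI yA (nb_mem xA) // trs_rel.
    - by move=> xA yA; rewrite mem_trs in_setI in_setC yA (@nb_mem (g^-1 * x)) ?in_setC ?trs_rel.
  have h2 : nb S (~: Y g) :\: ~: Y g \subset Ea :|: Eb :|: trs g Ea :|: trs g Eb.
    apply/subsetP => y; rewrite in_setD => /andP [yY /nbP [x xY xy]].
    move: yY xY; rewrite !in_setC !mem_symd !mem_trs negbK => yY xY.
    rewrite !in_setU -!orbA; apply: (boolX _ _ _ _ xY yY).
    - by move=> xA yA; rewrite in_setI yA (nb_mem xA xy).
    - by move=> xA yA; rewrite in_setI in_setC yA (@nb_mem x) ?in_setC.
    - by move=> xA yA; rewrite mem_trs in_setI yA (nb_mem xA) // trs_rel.
    - by move=> xA yA; rewrite mem_trs in_setI in_setC yA (@nb_mem (g^-1 * x)) ?in_setC ?trs_rel.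
  case: (dich h1 h2) => h; [left; exact: leq_trans h cE | right; apply: leq_trans h _; by rewrite leq_add2l cE].

set H := [set z | (#|Y z| <= dl)%N].
have memH : forall g, (g \in H) = (#|Y g| <= dl)%N by move=> g; rewrite /H inE.
have notH : forall g, g \notin H -> (#|gT| <= #|Y g| + dl)%N.
  by move=> g; rewrite memH; case: (dichY g) => [->|].
have toH : forall g, (#|Y g| <= 2 * dl)%N -> g \in H.
  move=> g hg; rewrite memH; case: (dichY g) => // h.
  have : (#|gT| <= 3 * dl)%N by apply: leq_trans h _; lia.
  by rewrite leqNgt g3.
have H1 : 1 \in H by rewrite memH /Y trs1 /symd setDv setU0 cards0.
have HM : forall g h, g \in H -> h \in H -> g * h \in H.
  move=> g h hg hh; apply: toH; rewrite !memH in hg hh.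
  apply: leq_trans (symd_tri _ (trs g A) _) _.
  rewrite -trs_trs card_symd_trs -/(Y g) -/(Y h).
  by apply: leq_trans (leq_add hg hh) _; lia.
have HV : forall g, g \in H -> g^-1 \in H.
  move=> g hg; rewrite !memH /Y in hg *.
  by rewrite -(card_symd_trs g) trs_trs mulgV trs1 symd_sym.
have HnV : forall g h, g \notin H -> h \notin H -> g^-1 * h \in H.
  move=> g h ng nh; apply: toH; rewrite /Y.
  rewrite -(card_symd_trs g) trs_trs mulKVg.
  apply: leq_trans (symd_tri _ (~: A) _) _.
  have e1 : (#|symd (trs g A) (~: A)| + #|Y g| = #|gT|)%N.
    by rewrite /Y (symd_sym A); apply: symdC_card.
  have e2 : (#|symd (~: A) (trs h A)| + #|Y h| = #|gT|)%N.
    by rewrite /Y (symd_sym (~: A)) (symd_sym A); apply: symdC_card.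
  have := notH _ ng; have := notH _ nh.
  move: e1 e2; set u := #|symd (trs g A) _|; set v := #|symd (~: A) _|.
  move=> e1 e2 f1 f2.
  have : (u + v <= 2 * dl)%N by lia.
  by [].
have cr : (#|symd (~: A) A'| <= #|I| + #|C|)%N.
  apply: leq_trans (_ : #|I :|: C| <= _)%N; last exact: card_U_le.
  apply: subset_leq_card; apply/subsetP => y; rewrite mem_symd !in_setU !in_setI !in_setC !in_setU.
  by case: (y \in A); case: (y \in A').
have Hsg : forall g, g \in H -> sg g \in H.
  move=> g; rewrite !memH => hg.
  have : (#|Y (sg g)| <= 2 * (#|I| + #|C|) + dl)%N.
    rewrite /Y -symdCC -trsC.
    apply: leq_trans (symd_tri _ A' _) _.
    apply: leq_trans (leq_add (leqnn _) (symd_tri _ (trs (sg g) A') _)) _.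
    rewrite card_symd_trs -pre_trs -pre_symd card_pre // -/(Y g).
    rewrite (symd_sym A').
    have L : forall a b r : nat, (a <= r -> b <= dl -> a + (b + a) <= 2 * r + dl)%N.
      by move=> a b r; lia.
    exact: L cr hg.
  move=> h; case: (dichY (sg g)) => // h'.
  have : (#|gT| <= 2 * (#|I| + #|C|) + 2 * dl)%N.
    apply: leq_trans h' _.
    have L2 : forall a b : nat, (a <= b + dl -> a + dl <= b + 2 * dl)%N by move=> a b; lia.
    exact: L2 h.
  by rewrite leqNgt g4.
have [g0 g0H] : exists g0, g0 \notin H.
  case: (pickP [pred g | g \notin H]) => [g0 /= hg0|allH]; first by exists g0.
  exfalso.
  have hd : forall h, h \in [set: gT] -> (#|symd A (trs h A)| <= dl)%N.
    by move=> h _; have := allH h; rewrite /= => /negbFE; rewrite memH.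
  have av := avg (fun x y _ _ => in_setT (x * y^-1)) (subsetT A) hd.
  rewrite cardsT in av.
  have av' : (2 * #|A| * #|gT| <= #|gT| * dl + 2 * (#|A| * #|A|))%N := av.
  have h2 : (#|A| * (2 * #|A|) <= #|A| * #|gT|)%N := leq_mul (leqnn _) hA.
  have h3 : (#|A| * #|gT| <= dl * #|gT|)%N by nia.
  have Npos : (0 < #|gT|)%N by lia.
  by rewrite leq_pmul2r // leqNgt g5 in h3.
have eHc : ~: H = trs g0 H.
  apply/setP => y; rewrite in_setC mem_trs; apply/idP/idP.
    by move=> yH; exact: HnV g0H yH.
  move=> hy; apply/negP => yH.
  have := HM _ _ yH (HV _ hy); rewrite invMg invgK mulKVg => g0in.
  by rewrite g0in in g0H.
have cHc : #|~: H| = #|H| by rewrite eHc card_trs.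
have cH : (#|H| + #|~: H| = #|gT|)%N := cardsC H.
have hsgH : forall y, (sg y \in H) = (y \in H).
  by move=> y; apply/idP/idP => [/Hsg|/Hsg //]; rewrite sgK.
have hHtr : forall h z, h \in H -> (h^-1 * z \in H) = (z \in H).
  move=> h z hH; apply/idP/idP => [hz|zH]; last exact: HM (HV _ hH) zH.
  by have := HM _ _ hH hz; rewrite mulKVg.
set Z := H :&: A; set Z' := H :\: A.
have hdZ : forall h, h \in H -> (#|symd Z (trs h Z)| <= dl)%N.
  move=> h hH; have := hH; rewrite memH => hY; apply: leq_trans _ hY.
  apply: subset_leq_card; apply/subsetP => y; rewrite /Y !mem_symd !mem_trs !in_setI (hHtr h y hH).
  by case: (y \in H).
have av := avg (fun x y hx hy => HM x _ hx (HV y hy)) (subsetIl H A) hdZ.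
have av' : (2 * #|Z| * #|H| <= #|H| * dl + 2 * (#|Z| * #|Z|))%N := av.
have cZZ : (#|Z| + #|Z'| = #|H|)%N := cardsID A H.
have Hpos : (0 < #|H|)%N by apply/card_gt0P; exists 1.
have minZ : (#|Z| <= dl)%N \/ (#|Z'| <= dl)%N.
  case: (leqP #|Z| #|Z'|) => hz; [left|right].
    have : (#|Z| * #|H| <= dl * #|H|)%N.
      move: av' hz; rewrite -cZZ; move: #|Z| #|Z'| => a b; nia.
    by rewrite leq_pmul2r.
  have : (#|Z'| * #|H| <= dl * #|H|)%N.
    move: av' hz; rewrite -cZZ; move: #|Z| #|Z'| => a b; nia.
  by rewrite leq_pmul2r.
have fin : forall K : {set gT}, (forall y, (sg y \in K) = (y \in K)) ->
    (2 * #|K| = #|gT|)%N -> (#|A| <= #|I| + 2 * #|K :\: A|)%N.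
  move=> K hK cK.
  have e1 : #|K :\: A'| = #|K :\: A|.
    rewrite -(card_pre (K :\: A) sgK); apply: eq_card => y; rewrite !inE hK.
    by [].
  have e2 : (#|K| <= #|K :\: A| + #|K :\: A'| + #|I|)%N.
    apply: (@leq_trans #|(K :\: A) :|: (K :\: A') :|: I|).
      apply: subset_leq_card; apply/subsetP => y yK.
      rewrite !in_setU !in_setD !in_setI yK.
      by case: (y \in A); case: (y \in A').
    apply: leq_trans (card_U_le _ _) _; rewrite leq_add2r.
    exact: card_U_le.
  lia.
case: minZ => hz.
  have hK : forall y, (sg y \in ~: H) = (y \in ~: H) by move=> y; rewrite !in_setC hsgH.
  have cK : (2 * #|~: H| = #|gT|)%N by lia.
  have h1 := fin _ hK cK.
  have a1 : (#|~: H :&: A| + #|~: H :\: A| = #|~: H|)%N := cardsID A (~: H).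
  have a2 : (#|A :&: H| + #|A :\: H| = #|A|)%N := cardsID H A.
  have a3 : #|~: H :&: A| = #|A :\: H| by rewrite setDE setIC.
  have a4 : #|A :&: H| = #|Z| by rewrite /Z setIC.
  have : (#|A| <= #|I| + #|C| + 2 * dl)%N.
    move: h1 a1 a2 a3 a4 hz cK cBC cBle hA cHc.
    move: #|~: H :&: A| #|~: H :\: A| #|A :\: H| #|A :&: H| #|~: H| #|H|.
    move=> x1 x2 x3 x4 x5 x6; lia.
  lia.
have cK : (2 * #|H| = #|gT|)%N by lia.
have h1 := fin _ hsgH cK.
have hz' : (#|H :\: A| <= dl)%N := hz.
lia.
Qed.

End Key.

Close Scope group_scope.

Lemma out_id (gT : finGroupType) (S X : {set gT}) :
  (forall s, s \in S -> (s^-1)%g \in S) ->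
  out_nbhd (cay_adj id S) X = nb S X :\: X.
Proof.
move=> Ssym; apply/setP => y; rewrite /out_nbhd in_setD inE; congr (_ && _).
apply/exists_inP/nbP => [[x xX]|[x xX xy]].
  rewrite /cay_adj => /orP [/exists_inP [s sS /eqP ->]|/exists_inP [s sS /eqP xe]].
    by exists x => //; rewrite mulKg.
  exists x => //=; have := Ssym _ sS.
  suff -> : (x^-1 * y = s^-1)%g by [].
  by rewrite xe /= invMg -mulgA mulVg mulg1.
exists x => //; apply/orP; left; apply/exists_inP; exists (x^-1 * y)%g => //.
by rewrite /= mulKVg.
Qed.

Lemma O_sub (gT : finGroupType) (S T : {set gT}) (sg : gT -> gT) (A : {set gT}) :
  (forall s, s \in S -> (s^-1)%g \in S) -> S \subset T ->
  involutive sg ->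
  (nb S (pre sg A) :|: pre sg (nb S A)) :\: A \subset out_nbhd (cay_adj sg T) A.
Proof.
move=> Ssym ST sgK; apply/subsetP => y; rewrite in_setD => /andP [yA].
move=> hy; rewrite /out_nbhd inE yA /=; move: hy; rewrite in_setU => /orP [/nbP [x xA xy]|].
  apply/exists_inP; exists (sg x); first by move: xA; rewrite inE.
  apply/orP; right; apply/exists_inP; exists (y^-1 * x)%g.
    by apply: (subsetP ST); have := Ssym _ xy; rewrite invMg invgK.
  by rewrite mulKVg.
rewrite inE => /nbP [a aA ay].
apply/exists_inP; exists a => //; apply/orP; left; apply/exists_inP.
exists (a^-1 * sg y)%g; first exact: (subsetP ST).
by rewrite mulKVg sgK.
Qed.

Theorem theorem8p2 (gT : nat -> finGroupType) (S : forall n, {set gT n})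
    (d k : nat) (sigma : forall n, 'I_k -> gT n -> gT n) :
  (forall n s, s \in S n -> (s^-1)%g \in S n) ->
  expander_family (fun n => cay_adj id (S n)) d ->
  (2 <= k)%N ->
  (forall n i, bijective (sigma n i)) ->
  (forall n i, {morph sigma n i : x y / (x * y)%g}) ->
  (forall n i x, sigma n i (sigma n i x) = x) ->
  (forall n i j x, sigma n i (sigma n j x) = sigma n j (sigma n i x)) ->
  (forall i : 'I_k,
     expander_family (fun n => cay_adj (sigma n i) (Tset (sigma n) (S n))) (2 ^ k * d))
  /\
  (forall n (i j : 'I_k),
     spectra_eq_up_to_sign (cay_adjmx (sigma n i) (Tset (sigma n) (S n)))
                           (cay_adjmx (sigma n j) (Tset (sigma n) (S n)))).
Proof.
move=> Ssym [hdeg [eps [eps0 hexp]]] _ _ sM sK sC.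
have Sd : forall n, (#|S n| <= d)%N.
  move=> n; apply: leq_trans (hdeg n 1%g); apply: subset_leq_card.
  apply/subsetP => s sS; rewrite inE /cay_adj; apply/orP; left.
  by apply/exists_inP; exists s => //=; rewrite mul1g.
split; last first.
  move=> n i j; apply: spectra_sq.
  rewrite !adjmx_sq //; move=> x; exact: Tset_sgE.
move=> i; split.
  move=> n x.
  set T := Tset (sigma n) (S n).
  apply: (@leq_trans #|T|); last first.
    apply: leq_trans (card_Tset (sigma n) (S n)) _.
    by rewrite leq_mul2l Sd orbT.
  apply: leq_trans (leq_imset_card (fun t => (sigma n i x * t)%g) T).
  apply: subset_leq_card; apply/subsetP => y; rewrite inE /cay_adj.
  case/orP => /exists_inP [s sT /eqP ->]; apply/imsetP.
    exists (sigma n i s); first exact: Tset_sg.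
    by rewrite sM.
  exists (s^-1)%g; first exact: (Tset_inv (sM n) (Ssym n) sT).
  by rewrite sK mulgK.
set M := Num.Def.archi_bound (eps^-1).
have hM : (eps^-1 < M%:R)%R by apply: archi_boundP; rewrite invr_ge0 ltW.
set K := (70 * (M.+1 * (M.+1 * d.+1)))%N.
have Kpos : (0 < K)%N by rewrite /K.
exists (K%:R^-1)%R; split; first by rewrite invr_gt0 ltr0n.
move=> n A hA.
set T := Tset (sigma n) (S n).
have hexp' : forall X : {set gT n}, (2 * #|X| <= #|gT n|)%N ->
    (#|X| <= M * #|nb (S n) X :\: X|)%N.
  move=> X hX; have := hexp n X hX; rewrite out_id //; last exact: Ssym.
  set E := #|_ :\: X| => h.
  rewrite -(ler_nat algC) natrM.
  apply: (@le_trans _ _ (eps^-1 * E%:R)%R).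
    by rewrite -(ler_pM2l eps0) mulrA mulfV ?gt_eqF // mul1r.
  by apply: ler_wpM2r; [exact: ler0n | exact: ltW].
have hk := key (Ssym n) (sK n i) (sM n i) (Sd n) hexp' hA.
have hsub := O_sub A (Ssym n) (S_sub_Tset (sigma n) (S n)) (sK n i).
have h2 : (#|A| <= K * #|out_nbhd (cay_adj (sigma n i) T) A|)%N.
  by apply: leq_trans hk _; rewrite leq_mul2l subset_leq_card ?orbT.
have Kp : (0 < K%:R :> algC)%R by rewrite ltr0n.
rewrite -(ler_pM2l Kp) mulrA mulfV ?gt_eqF // mul1r.
by rewrite -natrM ler_nat.
Qed.
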